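(* Let $\mathcal{B}$ be a $d$-dimensional manifold with a torsion-free flat connection $\nabla$ and $F\in C^\infty(\mathcal{B})$. If $F$ satisfies Condition N (weak nondegeneracy) at every point of $\mathcal{B}$, then $F$ satisfies the Rüssmann condition.
   Context: $\mathcal{K}_b=\ker dF_b$. Condition N at $b$: $X\in\mathcal{K}_b$ and $\nabla_X\nabla F=0$ at $b$ imply $X=0$. For a parallel vector field $X$ on an open set $\mathcal{O}$, $\Omega_X=dF(X)$ and $\Sigma_X=\{c\in\mathcal{O}:\Omega_X(c)=0\}$. Rüssmann condition: for every open $\mathcal{O}\subset\mathcal{B}$ and every non-vanishing parallel vector field $X$ on $\mathcal{O}$, $\Omega_X$ does not vanish identically on any nonempty open subset of $\mathcal{O}$ (equivalently $\Sigma_X$ has empty interior; in flat coordinates, the image of $\xi\mapsto(\partial F/\partial\xi_k)_k$ over an open set does not lie in a hyperplane through the origin). *)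

(* Defs.v *)
From HB Require Import structures.
From mathcomp Require Import all_boot all_order all_algebra.
From mathcomp Require Import all_classical all_reals all_analysis.
Set Implicit Arguments. Unset Strict Implicit. Unset Printing Implicit Defensive.
Import Order.TTheory GRing.Theory Num.Theory.
Import numFieldNormedType.Exports.
Local Open Scope classical_set_scope.
Local Open Scope ring_scope.

Fixpoint Ck_on (R : realType) (d : nat) (k : nat) (U : set 'rV[R]_d)
    (g : 'rV[R]_d -> R^o) : Prop :=
  match k with
  | 0 => forall y, U y -> {for y, continuous g}
  | k'.+1 => (forall y, U y -> {for y, continuous g}) /\
             (forall y, U y -> differentiable g y) /\
             (forall v : 'rV[R]_d, Ck_on k' U (fun y => 'D_v g y))
  end.

Definition smooth_on (R : realType) (d : nat) (U : set 'rV[R]_d)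
    (g : 'rV[R]_d -> R^o) : Prop := forall k, Ck_on k U g.

(* A d-dimensional manifold with a torsion-free flat connection, presented   *)
(* by an atlas of flat (affine) charts: the chart transitions are affine     *)
(* maps y |-> y *m A + c with A invertible, and the connection nabla is the *)
(* one whose Christoffel symbols vanish in every chart of the atlas.         *)
Record flat_manifold (R : realType) (d : nat) (B : topologicalType) := {
  chart : Type;
  cdom : chart -> set B;
  cmap : chart -> B -> 'rV[R]_d;
  cinv : chart -> 'rV[R]_d -> B;
  cdom_open : forall i, open (cdom i);
  ccover : forall b : B, exists i, cdom i b;
  cimg_open : forall i, open (cmap i @` cdom i);
  cinvK : forall i x, cdom i x -> cinv i (cmap i x) = x;
  cmapK : forall i y, (cmap i @` cdom i) y -> cmap i (cinv i y) = y;
  cmap_cont : forall i x, cdom i x -> {for x, continuous (cmap i)};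
  cinv_cont : forall i y, (cmap i @` cdom i) y -> {for y, continuous (cinv i)};
  trA : chart -> chart -> 'M[R]_d;
  trc : chart -> chart -> 'rV[R]_d;
  trA_unit : forall i j, trA i j \in unitmx;
  ctrans : forall i j x, cdom i x -> cdom j x ->
     cmap j x = cmap i x *m trA i j + trc i j
}.

Section FlatDefs.
Variables (R : realType) (d : nat) (B : topologicalType)
          (M : flat_manifold R d B).

Definition cimg (i : chart M) : set 'rV[R]_d := cmap i @` cdom i.

Definition locF (F : B -> R) (i : chart M) : 'rV[R]_d -> R^o :=
  fun y => F (cinv i y).

Definition smooth_fun (F : B -> R) : Prop :=
  forall i, smooth_on (cimg i) (locF F i).

(* Condition N at b: in a flat chart i around b, with X the components of a *)
(* tangent vector at b: dF_b(X) = 0 (X in K_b) and (nabla_X nabla F)_b = 0,  *)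
(* i.e. D_X (D_Y F) = 0 at b for every Y, imply X = 0.                      *)
Definition conditionN (F : B -> R) (b : B) : Prop :=
  forall i, cdom i b ->
  forall X : 'rV[R]_d,
    'D_X (locF F i) (cmap i b) = 0 ->
    (forall Y : 'rV[R]_d,
        'D_X (fun y => 'D_Y (locF F i) y) (cmap i b) = 0) ->
    X = 0.

(* A vector field on O, given by its components X i x in each flat chart i  *)
(* (at x in O inter cdom i), compatible with the chart transitions.          *)
Definition vector_field (O : set B) (X : chart M -> B -> 'rV[R]_d) : Prop :=
  forall i j x, O x -> cdom i x -> cdom j x -> X j x = X i x *m trA i j.

(* parallel (nabla X = 0): components locally constant in flat charts *)
Definition parallel (O : set B) (X : chart M -> B -> 'rV[R]_d) : Prop :=
  vector_field O X /\
  forall i x, O x -> cdom i x ->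
    \forall y \near x, (O y /\ cdom i y) -> X i y = X i x.

Definition nonvanishing (O : set B) (X : chart M -> B -> 'rV[R]_d) : Prop :=
  forall i x, O x -> cdom i x -> X i x != 0.

Definition Omega_zero (F : B -> R) (X : chart M -> B -> 'rV[R]_d) (c : B)
  : Prop :=
  forall i, cdom i c -> 'D_(X i c) (locF F i) (cmap i c) = 0.

Definition Sigma (O : set B) (F : B -> R) (X : chart M -> B -> 'rV[R]_d)
  : set B := [set c | O c /\ Omega_zero F X c].

Definition russmann (F : B -> R) : Prop :=
  forall (O : set B) (X : chart M -> B -> 'rV[R]_d),
    open O -> parallel O X -> nonvanishing O X ->
    forall W : set B, open W -> W `<=` O -> W !=set0 ->
      ~ (forall c, W c -> Omega_zero F X c).

End FlatDefs.

(* Main.v *)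
From HB Require Import structures.
From mathcomp Require Import all_boot all_order all_algebra.
From mathcomp Require Import all_classical all_reals all_analysis.
Require Import Defs.
Set Implicit Arguments. Unset Strict Implicit. Unset Printing Implicit Defensive.
Import Order.TTheory GRing.Theory Num.Theory.
Import numFieldNormedType.Exports.
Local Open Scope classical_set_scope.
Local Open Scope ring_scope.

Lemma line_cst (R : realType) (V : normedModType R) (f : V -> R^o) z v (a b : R) :
  a <= b -> (forall s, a <= s <= b -> differentiable f (z + s *: v) /\ 'D_v f (z + s *: v) = 0) ->
  f (z + b *: v) = f (z + a *: v).
Proof.
move=> ab H.
pose g := fun s : R => f (z + s *: v).
have dg s : a <= s <= b -> derivable g s 1 /\ 'D_1 g s = 0.
  move=> /H [df D0].
  have Hd := @diff_derivable _ _ _ f _ v df.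
  have E' : (fun h : R => h^-1 *: ((g \o shift s) (h *: 1) - g s)) =
            (fun h : R => h^-1 *: ((f \o shift (z + s *: v)) (h *: v) - f (z + s *: v))).
    apply/funext => h /=; rewrite /g; congr (_ *: (f _ - _)).
    by rewrite scaler1 scalerDl addrCA addrA.
  split; first by rewrite /derivable E'.
  by move: D0; rewrite /derive E'.
suff : g b - g a = 0 by move/eqP; rewrite subr_eq0 => /eqP.
have [||c cab ->] := @MVT_segment R g (fun _ => 0) a b ab; last by rewrite mul0r.
- move=> x; rewrite in_itv /= => /andP[ax xb].
  have [dx Dx] := dg x ltac:(by rewrite !ltW).
  by rewrite -Dx; apply: derivableP.
- apply: derivable_within_continuous => x; rewrite in_itv /= => /andP[ax xb].
  by case: (dg x ltac:(by rewrite ax xb)).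
Qed.
Lemma seg (R : realType) (V : normedModType R) (f : V -> R^o) (P : set V) X0 :
  (forall y, P y -> differentiable f y /\ 'D_X0 f y = 0) ->
  forall z (t : R), (forall s : R, `|s| <= `|t| -> P (z + s *: X0)) ->
  f (z + t *: X0) = f z.
Proof.
move=> H z t Hb; case: (leP 0 t) => t0.
- have := @line_cst R V f z X0 0 t t0; rewrite scale0r addr0; apply.
  move=> s /andP[s0 st]; apply: H; apply: Hb.
  by rewrite !ger0_norm // (le_trans s0 st).
- have := @line_cst R V f z X0 t 0 (ltW t0); rewrite scale0r addr0 => <- //.
  move=> s /andP[ts s0]; apply: H; apply: Hb.
  by rewrite !ler0_norm ?(ltW t0) // lerN2.
Qed.

Lemma key (R : realType) (V : normedModType R) (f : V -> R^o) y0 X0 (e : R) :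
  0 < e -> (forall y, ball y0 e y -> differentiable f y /\ 'D_X0 f y = 0) ->
  forall Y, 'D_X0 (fun y => 'D_Y f y) y0 = 0.
Proof.
move=> e0 H Y.
pose r1 := e / 2 / (`|X0| + 1).
pose r2 := e / 2 / (`|Y| + 1).
have r10 : 0 < r1 by rewrite /r1 divr_gt0 // ?divr_gt0 // ltr_wpDl.
have r20 : 0 < r2 by rewrite /r2 divr_gt0 // ?divr_gt0 // ltr_wpDl.
have A : forall (t h : R), `|t| < r1 -> `|h| < r2 -> forall s : R, `|s| <= `|t| ->
    ball y0 e ((y0 + h *: Y) + s *: X0).
  move=> t h tr hr s st.
  rewrite -ball_normE /= -addrA opprD addrA subrr sub0r normrN.
  apply: (le_lt_trans (ler_normD _ _)); rewrite !normrZ.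
  have h1 : `|h| * `|Y| < e / 2.
    apply: (le_lt_trans (y := `|h| * (`|Y| + 1))).
      by rewrite ler_wpM2l // lerDl.
    have ne : `|Y| + 1 != 0 by rewrite gt_eqF // ltr_wpDl.
    by rewrite -[e / 2](divfK ne) ltr_pM2r // ltr_wpDl.
  have h2 : `|s| * `|X0| < e / 2.
    apply: (le_lt_trans (y := `|s| * (`|X0| + 1))).
      by rewrite ler_wpM2l // lerDl.
    have ne : `|X0| + 1 != 0 by rewrite gt_eqF // ltr_wpDl.
    rewrite -[e / 2](divfK ne) ltr_pM2r ?ltr_wpDl //.
    exact: le_lt_trans st tr.
  by rewrite (splitr e) ltrD.
have B : forall t : R, `|t| < r1 -> 'D_Y f (y0 + t *: X0) = 'D_Y f y0.
  move=> t tr.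
  have Hd : derivable f y0 Y.
    by apply: diff_derivable; case: (H y0 (ballxx _ e0)).
  apply: cvg_lim => //.
  apply: cvg_trans Hd; apply: near_eq_cvg.
  have : \forall h \near (0:R)^', `|h| < r2 := nbhs_dnbhs (nbhs0_lt r20).
  apply: filterS => h hr /=.
  have -> : h *: Y + (y0 + t *: X0) = (y0 + h *: Y) + t *: X0 by rewrite addrCA addrA.
  rewrite (@seg R V f _ X0 H (y0 + h *: Y) t); last by move=> s st; exact: A tr hr s st.
  rewrite (@seg R V f _ X0 H y0 t) ?[h *: Y + y0]addrC //.
  move=> s st; have := A t 0 tr ltac:(by rewrite normr0) s st.
  by rewrite scale0r addr0.
rewrite /derive; apply: (lim_near_cst (@norm_hausdorff _ R^o)).
have : \forall h \near (0:R)^', `|h| < r1 := nbhs_dnbhs (nbhs0_lt r10).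
apply: filterS => h hr /=.
have := B h hr; rewrite /derive /= => E. rewrite [h *: X0 + y0]addrC E. by rewrite subrr scaler0.
Qed.

Theorem mainTheorem10 (R : realType) (d : nat) (B : topologicalType)
  (hB : hausdorff_space B) (M : flat_manifold R d B) (F : B -> R) :
  smooth_fun M F ->
  (forall b : B, conditionN M F b) ->
  russmann M F.
Proof.
move=> Fs CN O X Oo [vf par] nv W Wo WO [c Wc] Hzero.
have [i ci] := ccover M c.
have Oc := WO c Wc.
have X0n := nv i c Oc ci.
pose f := locF F i.
pose y0 := cmap i c.
pose X0 := X i c.
have Hy0 : cimg i y0 by exists c.
have Q : \forall c' \near c, W c' /\ cdom i c' /\ ((O c' /\ cdom i c') -> X i c' = X0).
  apply: filterI; first exact: open_nbhs_nbhs.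
  apply: filterI; first by apply: open_nbhs_nbhs; split => //; exact: cdom_open.
  exact: par.
have Qy : \forall y \near y0, W (cinv i y) /\ cdom i (cinv i y) /\
    ((O (cinv i y) /\ cdom i (cinv i y)) -> X i (cinv i y) = X0).
  have hc : cinv i y0 = c by exact: cinvK.
  have cc : (cinv i @ y0 --> c) by rewrite -hc; exact: cinv_cont.
  exact: cc _ Q.
have Cy : \forall y \near y0, cimg i y.
  by apply: open_nbhs_nbhs; split => //; exact: cimg_open.
have Hn : \forall y \near y0, differentiable f y /\ 'D_X0 f y = 0.
  apply: filterS2 Qy Cy => y [Wy [dy Xy]] cy.
  split; first by have := Fs i 1%N; case=> _ [+ _]; apply.
  have := Hzero _ Wy i dy; rewrite Xy; last by split => //; exact: WO.
  by rewrite cmapK.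
have [e e0 He] := (nbhs_ballP _ _).1 Hn.
have X00 := CN c i ci X0 (Hzero c Wc i ci) (fun Y => @key R _ f y0 X0 e e0 He Y).
by move: X0n; rewrite -/X0 X00 eqxx.
Qed.
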